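(* Let $q$ be a square-free positive integer and let $k\ge 1$. Suppose $(a,b,2^k)\in T_q$ is primitive and that there is no primitive triple $(x,y,2^j)\in T_q$ with $1\le j<k$. Then for every primitive triple $(x,y,2^r)\in T_q$ with $r\ge k$ there exists $n\in\mathbb Z$ such that $[x,y,2^r]=n\cdot[a,b,2^k]$.
   Context: $T_q$ denotes the set of integer triples $(a,b,c)\in\mathbb Z\times\mathbb Z\times\mathbb Z_{>0}$ with $a^2+qb^2=c^2$; such a triple is primitive if $\gcd(a,b,c)=1$. Two triples $(a,b,c),(A,B,C)\in T_q$ are called equivalent if there exist nonzero integers $m,n$ with $(ma,mb,|m|c)=(nA,nB,|n|C)$; $[a,b,c]$ denotes the equivalence class and $\mathcal P_q$ the set of classes. $\mathcal P_q$ is an abelian group under the well-defined operation $[a,b,c]+[A,B,C]=[aA-qbB,\ aB+bA,\ cC]$, with identity $[1,0,1]$ and inverse $-[a,b,c]=[-a,b,c]$; for $n\in\mathbb Z$, $n\cdot x$ denotes the $n$-th multiple of $x$ in this group. *)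

(* Defs.v *)
From Stdlib Require Import ZArith Znumtheory.
Open Scope Z_scope.

Definition triple := (Z * Z * Z)%type.

Definition squarefree (q : Z) : Prop :=
  forall p : Z, prime p -> ~ (p * p | q).

Definition inT (q : Z) (t : triple) : Prop :=
  let '(a, b, c) := t in a ^ 2 + q * b ^ 2 = c ^ 2 /\ 0 < c.

Definition primitive (t : triple) : Prop :=
  let '(a, b, c) := t in Z.gcd (Z.gcd a b) c = 1.

(* Equivalence of triples: exist nonzero m n with (ma,mb,|m|c) = (nA,nB,|n|C).
   Equality of classes [t] = [t'] in P_q means exactly this. *)
Definition triple_equiv (t t' : triple) : Prop :=
  let '(a, b, c) := t in let '(A, B, C) := t' in
  exists m n : Z, m <> 0 /\ n <> 0 /\
    m * a = n * A /\ m * b = n * B /\ Z.abs m * c = Z.abs n * C.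

(* Group operation on representatives: [a,b,c] + [A,B,C] = [aA - qbB, aB + bA, cC]. *)
Definition tadd (q : Z) (t t' : triple) : triple :=
  let '(a, b, c) := t in let '(A, B, C) := t' in
  (a * A - q * b * B, a * B + b * A, c * C).

Definition tzero : triple := (1, 0, 1).
Definition tneg (t : triple) : triple :=
  let '(a, b, c) := t in (- a, b, c).

(* A representative of the n-th multiple n·[t] in the group P_q. *)
Definition tmul (q : Z) (n : Z) (t : triple) : triple :=
  if 0 <=? n then Nat.iter (Z.to_nat n) (tadd q t) tzero
  else Nat.iter (Z.to_nat (- n)) (tadd q (tneg t)) tzero.

(* Main.v *)
Require Import Defs.
From Stdlib Require Import ZArith Znumtheory Lia.
Open Scope Z_scope.

Definition cr (u v : Z*Z) : Z := fst u * snd v - snd u * fst v.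
Definition mp (q:Z) (u v : Z*Z) : Z*Z :=
  (fst u * fst v - q * snd u * snd v, fst u * snd v + snd u * fst v).
Definition nm (q:Z) (u : Z*Z) : Z := fst u ^2 + q * snd u ^2.
Definition tp (t:triple) : Z*Z := let '(a,b,c) := t in (a,b).

Lemma tp_tadd q t t' : tp (tadd q t t') = mp q (tp t) (tp t').
Proof. destruct t as [[a b] c]; destruct t' as [[a' b'] c']; reflexivity. Qed.

Lemma cr_trans q u v w : nm q v <> 0 -> cr u v = 0 -> cr v w = 0 -> cr u w = 0.
Proof.
  intros H1 H2 H3.
  assert (E : nm q v * cr u w = fst v*(fst u*cr v w + fst w*cr u v)
     + q*snd v*(snd u*cr v w + snd w*cr u v)) by (unfold nm, cr; ring).
  rewrite H2, H3 in E. ring_simplify in E. apply Z.mul_eq_0 in E. destruct E; [contradiction|].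
  lia.
Qed.

Lemma cr_sym u v : cr u v = 0 -> cr v u = 0.
Proof. unfold cr; lia. Qed.

Lemma cr_mp q u v w : cr (mp q u w) (mp q v w) = cr u v * nm q w.
Proof. destruct u as [u1 u2], v as [v1 v2], w as [w1 w2]; unfold cr, mp, nm; cbn [fst snd]. ring. Qed.

Lemma inT_nm q t : 0 < q -> inT q t -> 0 < nm q (tp t).
Proof.
  destruct t as [[a b] c]; unfold inT, nm; cbn [fst snd tp]. intros Hq [E Hc].
  rewrite E. nia.
Qed.

Lemma inT_tadd q t t' : inT q t -> inT q t' -> inT q (tadd q t t').
Proof.
  destruct t as [[a b] c]; destruct t' as [[a' b'] c']; cbv beta iota zeta delta [inT tadd].
  intros [E1 H1] [E2 H2]. split; [|nia].
  transitivity ((a^2+q*b^2)*(a'^2+q*b'^2)); [ring|]. rewrite E1, E2; ring.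
Qed.

Lemma inT_iter q g m t0 : inT q g -> inT q t0 -> inT q (Nat.iter m (tadd q g) t0).
Proof. intros Hg H0; induction m; simpl; auto using inT_tadd. Qed.

Lemma inT_tmul q n g : inT q g -> inT q (tmul q n g).
Proof.
  intros Hg. assert (Hz : inT q tzero) by (unfold inT, tzero; lia).
  unfold tmul; destruct (0 <=? n); apply inT_iter; auto.
  destruct g as [[a b] c]; unfold inT, tneg in *; nia.
Qed.

Lemma tmul_neg q n g : n < 0 -> tmul q n g = tadd q (tneg g) (tmul q (n+1) g).
Proof.
  intros Hn. unfold tmul. destruct (Z.leb_spec 0 n); [lia|].
  destruct (Z.leb_spec 0 (n+1)).
  - assert (n = -1) by lia; subst; reflexivity.
  - replace (Z.to_nat (-n)) with (S (Z.to_nat (-(n+1)))). reflexivity.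
    rewrite <- Z2Nat.inj_succ by lia; f_equal; lia.
Qed.

Lemma tmul_pos q n g : 0 <= n -> tmul q (n+1) g = tadd q g (tmul q n g).
Proof.
  intros Hn. unfold tmul. destruct (Z.leb_spec 0 n); [|lia].
  destruct (Z.leb_spec 0 (n+1)); [|lia].
  replace (Z.to_nat (n+1)) with (S (Z.to_nat n)). reflexivity.
  rewrite <- Z2Nat.inj_succ by lia; f_equal.
Qed.

Lemma Pstep q n g : cr (tp (tmul q (n+1) g)) (mp q (tp (tmul q n g)) (tp g)) = 0.
Proof.
  destruct (Z.leb_spec 0 n).
  - rewrite tmul_pos by lia. rewrite tp_tadd.
    destruct (tp g), (tp (tmul q n g)); unfold cr, mp; cbn [fst snd]; ring.
  - rewrite (tmul_neg q n g) by lia. rewrite tp_tadd.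
    destruct g as [[a b] c]; simpl.
    destruct (tp (tmul q (n+1) (a,b,c))); unfold cr, mp; cbn [fst snd]; ring.
Qed.

Lemma cr_equiv q t t' : 0 < q -> inT q t -> inT q t' -> cr (tp t) (tp t') = 0 -> triple_equiv t t'.
Proof.
  destruct t as [[a b] c]; destruct t' as [[A B] C]; unfold inT, cr, triple_equiv; cbn [fst snd tp].
  intros Hq [E1 H1] [E2 H2] Hc.
  assert (K : A^2*(a^2+q*b^2) = a^2*(A^2+q*B^2)).
  { assert (a*B = b*A) by lia.
    transitivity (A^2*a^2 + q*(b*A)^2); [ring|]. rewrite <- H. ring. }
  assert (K2 : B^2*(a^2+q*b^2) = b^2*(A^2+q*B^2)).
  { assert (a*B = b*A) by lia.
    transitivity ((a*B)^2 + q*b^2*B^2); [ring|]. rewrite H. ring. }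
  destruct (Z.eq_dec A 0) as [HA|HA].
  - subst A. assert (B <> 0) by (intro; subst; nia).
    assert (b <> 0) by (intro; subst; nia).
    exists B, b. repeat split; try lia.
    assert ((Z.abs B * c)^2 = (Z.abs b * C)^2).
    { destruct (Z.abs_spec B) as [[_ ->]|[_ ->]]; destruct (Z.abs_spec b) as [[_ ->]|[_ ->]];
      rewrite !Z.pow_mul_l, <- E1, <- E2; generalize K K2; clear; intros K K2; ring_simplify; ring_simplify in K; ring_simplify in K2; lia. }
    apply Z.pow_inj_l with 2; try lia; nia.
  - assert (a <> 0) by (intro; subst; nia).
    exists A, a. repeat split; try lia.
    assert ((Z.abs A * c)^2 = (Z.abs a * C)^2).
    { destruct (Z.abs_spec A) as [[_ ->]|[_ ->]]; destruct (Z.abs_spec a) as [[_ ->]|[_ ->]];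
      rewrite !Z.pow_mul_l, <- E1, <- E2; generalize K K2; clear; intros K K2; ring_simplify; ring_simplify in K; ring_simplify in K2; lia. }
    apply Z.pow_inj_l with 2; try lia; nia.
Qed.

Lemma two_dvd_odd u w : Z.Odd u -> (2 | u*w) -> (2 | w).
Proof.
  intros [m Hm] H. destruct (prime_mult 2 prime_2 u w H) as [[s Hs]|]; auto. lia.
Qed.

Lemma pow2_dvd_odd n : 0 <= n -> forall u w, Z.Odd u -> (2^n | u*w) -> (2^n | w).
Proof.
  intros Hn. pattern n; apply natlike_ind; auto.
  - intros; simpl; apply Z.divide_1_l.
  - clear n Hn. intros x Hx IH u w Hu H. rewrite Z.pow_succ_r in * by lia.
    assert (H2 : (2 | u*w)) by (apply Z.divide_trans with (2*2^x); auto; exists (2^x); ring).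
    destruct (two_dvd_odd u w Hu H2) as [w' ->].
    destruct H as [t Ht].
    assert (u*w' = t*2^x) by lia.
    destruct (IH u w' Hu) as [s Hs]. exists t; lia.
    exists s. rewrite Hs. ring.
Qed.

Lemma pow2_sqrt n : 0 <= n -> forall X, (2^n*2^n | X*X) -> (2^n | X).
Proof.
  intros Hn. pattern n; apply natlike_ind; auto.
  - intros; simpl; apply Z.divide_1_l.
  - clear n Hn. intros x Hx IH X H. rewrite Z.pow_succ_r in * by lia.
    assert (H2 : (2 | X*X)) by (apply Z.divide_trans with (2*2^x*(2*2^x)); auto; exists (2*2^x*2^x); ring).
    destruct (prime_mult 2 prime_2 X X H2) as [[X' ->]|[X' ->]];
    destruct H as [t Ht];
    (assert (X'*X' = t*(2^x*2^x)) by lia);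
    (destruct (IH X') as [s Hs]; [exists t; lia|]);
    exists s; rewrite Hs; ring.
Qed.

Lemma odd_gcd t : 0 <= t -> forall u, Z.Odd u -> Z.gcd u (2^t) = 1.
Proof.
  intros Ht u [m Hm]. apply Zgcd_1_rel_prime.
  assert (R2 : rel_prime u 2).
  { apply bezout_rel_prime. apply Bezout_intro with 1 (-m). lia. }
  pattern t; apply natlike_ind; auto.
  - simpl. apply rel_prime_sym, rel_prime_1.
  - intros x Hx IH. rewrite Z.pow_succ_r by lia. apply rel_prime_mult; auto.
Qed.

Lemma prim_of_odd u v t : 0 <= t -> Z.Odd u \/ Z.Odd v -> primitive (u,v,2^t).
Proof.
  intros Ht Ho. unfold primitive.
  assert (G: (Z.gcd (Z.gcd u v) (2^t) | 1)).
  { destruct Ho as [Ho|Ho]; rewrite <- (odd_gcd t Ht _ Ho); apply Z.gcd_greatest;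
    try apply Z.gcd_divide_r; apply Z.divide_trans with (Z.gcd u v);
    try apply Z.gcd_divide_l; try apply Z.gcd_divide_r. }
  apply Z.divide_1_r in G. pose proof (Z.gcd_nonneg (Z.gcd u v) (2^t)). lia.
Qed.

Lemma reduce q : 0 < q -> forall t, 0 <= t -> forall u v, u^2+q*v^2 = (2^t)^2 ->
  exists t' u' v' s, 0 <= t' <= t /\ inT q (u',v',2^t') /\ primitive (u',v',2^t')
    /\ u = s*u' /\ v = s*v'.
Proof.
  intros Hq t Ht. pattern t; apply natlike_ind; auto.
  - intros u v E. exists 0, u, v, 1. split; [lia|]. split; [split; [exact E|simpl; lia]|].
    split; [unfold primitive; apply Z.gcd_1_r|lia].
  - clear t Ht. intros x Hx IH u v E.
    assert (P2 : 0 < 2^Z.succ x) by (apply Z.pow_pos_nonneg; lia).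
    destruct (Z.Even_or_Odd u) as [[u1 Hu]|Hu].
    destruct (Z.Even_or_Odd v) as [[v1 Hv]|Hv].
    + subst u v. rewrite Z.pow_succ_r in E by lia.
      assert (E' : u1^2+q*v1^2 = (2^x)^2) by nia.
      destruct (IH u1 v1 E') as (t' & u' & v' & s & H1 & H2 & H3 & H4 & H5).
      exists t', u', v', (2*s). split; [lia|]. split; auto. split; auto. lia.
    + exists (Z.succ x), u, v, 1. split; [lia|]. split; [split; auto|].
      split; [apply prim_of_odd; auto; lia|lia].
    + exists (Z.succ x), u, v, 1. split; [lia|]. split; [split; auto|].
      split; [apply prim_of_odd; auto; lia|lia].
Qed.

Lemma odd_of_prim q r x y : squarefree q -> 1 <= r -> inT q (x,y,2^r) -> primitive (x,y,2^r)
  -> Z.Odd x /\ Z.Odd y.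
Proof.
  intros Sq Hr [E Hc] Pr. unfold primitive in Pr.
  replace (2^r) with (2*2^(r-1)) in E, Pr by (rewrite <- Z.pow_succ_r by lia; f_equal; lia).
  set (P := 2^(r-1)) in *.
  destruct (Z.Even_or_Odd x) as [[x1 Hx]|Hx]; destruct (Z.Even_or_Odd y) as [[y1 Hy]|Hy].
  - exfalso. assert (D : (2 | Z.gcd (Z.gcd x y) (2*P))).
    { apply Z.gcd_greatest. apply Z.gcd_greatest; [exists x1|exists y1]; lia. exists P; lia. }
    rewrite Pr in D. apply Z.divide_pos_le in D; lia.
  - exfalso. destruct Hy as [y1 Hy]. subst x y.
    apply (Sq 2 prime_2). exists (P^2 - x1^2 - q*y1^2 - q*y1). nia.
  - exfalso. destruct Hx as [x1' Hx]. subst x y. nia.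
  - auto.
Qed.

Lemma nm_mp q u v : nm q (mp q u v) = nm q u * nm q v.
Proof. destruct u as [u1 u2], v as [v1 v2]; unfold nm, mp; cbn [fst snd]; ring. Qed.


Lemma v_zero q u v : 0 < q -> q <> 1 -> u^2 + q*v^2 = 1 -> v = 0.
Proof.
  intros Hq Q1 E. destruct (Z.eq_dec v 0); auto. exfalso.
  assert (1 <= v^2) by (clear - n; nia).
  assert (0 <= u^2) by (clear; nia).
  assert (2*1 <= q*v^2) by (apply Z.mul_le_mono_nonneg; lia).
  lia.
Qed.

Lemma main q k a b : 0 < q -> squarefree q -> 2 <= k ->
  inT q (a, b, 2 ^ k) -> primitive (a, b, 2 ^ k) ->
  ~ (exists (x y j : Z), 1 <= j < k /\ inT q (x, y, 2 ^ j) /\ primitive (x, y, 2 ^ j)) ->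
  forall N : nat, forall r x y, r <= Z.of_nat N -> k <= r -> inT q (x, y, 2 ^ r) -> primitive (x, y, 2 ^ r) ->
  exists n, cr (x,y) (tp (tmul q n (a,b,2^k))) = 0.
Proof.
  intros Hq Sq Hk Ig Pg NJ N. induction N as [|N IH]; intros r x y HrN Hkr Ix Px.
  { lia. }
  set (g := (a,b,2^k)) in *.
  assert (Hnz : forall n, nm q (tp (tmul q n g)) <> 0).
  { intro n. pose proof (inT_nm q _ Hq (inT_tmul q n g Ig)). lia. }
  destruct (odd_of_prim q r x y Sq ltac:(lia) Ix Px) as [Ox Oy].
  destruct (odd_of_prim q k a b Sq ltac:(lia) Ig Pg) as [Oa Ob].
  set (e := 2^(k-1)). set (R := 2^(r-k)). set (d := 2*e*e).
  assert (He : 2^k = 2*e) by (unfold e; rewrite <- Z.pow_succ_r by lia; f_equal; lia).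
  assert (HR : 2^r = 2^k*R) by (unfold R; rewrite <- Z.pow_add_r by lia; f_equal; lia).
  assert (Hd : d = 2^(2*k-1)) by (unfold d, e; rewrite <- Z.pow_succ_r, <- Z.pow_add_r by lia;
                                  replace (2*2^(k-1+(k-1))) with (2^(Z.succ (k-1+(k-1)))) by (rewrite Z.pow_succ_r by lia; ring); f_equal; lia).
  assert (He2 : e*e = 2^(2*k-2)) by (unfold e; rewrite <- Z.pow_add_r by lia; f_equal; lia).
  assert (H2R : 2*R = 2^(r-k+1)) by (unfold R; rewrite <- Z.pow_succ_r by lia; f_equal; lia).
  assert (epos : 0 < e) by (unfold e; apply Z.pow_pos_nonneg; lia).
  assert (Rpos : 0 < R) by (unfold R; apply Z.pow_pos_nonneg; lia).
  assert (Hdd : d = 2*e*e) by reflexivity.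
  clearbody e R d.
  destruct Ix as [Ex _]. destruct Ig as [Ea Hcg]. rewrite HR, He in Ex. rewrite He in Ea.
  assert (Q1 : q <> 1).
  { intro; subst q. destruct Oa as [a1 Ha1], Ob as [b1 Hb1]. subst a b.
    assert (HH : 4*(a1*a1+a1+b1*b1+b1) + 2 = 4*(e*e)) by (transitivity ((2*e)^2); [rewrite <- Ea|]; ring). clear - HH; lia. }
  assert (D : forall X Y, X^2+q*Y^2 = (2*e*R*(2*e))^2 -> (d | Y) ->
            exists n0, cr (X,Y) (tp (tmul q n0 g)) = 0).
  { intros X Y EX [t Ht].
    assert (DX : (d | X)).
    { rewrite Hd. apply (pow2_sqrt (2*k-1)); [clear - Hk; lia|]. rewrite <- Hd.
      exists (4*R^2 - q*t^2). rewrite Ht in EX.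
      assert (XX : X*X = (2*e*R*(2*e))^2 - q*(t*d)^2) by (rewrite <- EX; ring).
      rewrite XX. rewrite Hdd; ring. }
    destruct DX as [X2 HX].
    assert (E2 : X2^2 + q*t^2 = (2^(r-k+1))^2).
    { rewrite <- H2R. subst X Y.
      apply Z.mul_reg_l with (4*e^4); [clear - epos; pose proof (Z.pow_pos_nonneg e 4 ltac:(lia) ltac:(lia)); lia|].
      transitivity ((X2*d)^2 + q*(t*d)^2); [rewrite Hdd; ring|]. rewrite EX. ring. }
    destruct (reduce q Hq (r-k+1) ltac:(clear - Hkr; lia) X2 t E2) as (t' & u' & v' & s & Ht' & Iu & Pu & Hu & Hv).
    assert (Hc : cr (X,Y) (u',v') = 0) by (unfold cr; cbn [fst snd]; subst; ring).
    destruct (Z.eq_dec t' 0) as [T0|T0].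
    - exists 0. subst t'. destruct Iu as [Eu _]. change (2^0) with 1 in Eu.
      assert (v' = 0) by (apply (v_zero q u' v'); auto). subst. unfold tmul, tzero, cr; simpl. ring.
    - assert (k <= t').
      { destruct (Z.le_gt_cases k t') as [HH|HH]; auto. exfalso; apply NJ. exists u', v', t'. split; auto. clear - T0 Ht' HH; lia. }
      destruct (IH t' u' v' ltac:(clear - Ht' HrN Hk; lia) H Iu Pu) as [n0 Hn0].
      exists n0. apply cr_trans with q (u',v'); auto.
      pose proof (inT_nm q _ Hq Iu) as HH; cbn [tp] in HH; clear - HH; lia. }
  destruct Ox as [x1 Hx1], Oy as [y1 Hy1], Oa as [a1 Ha1], Ob as [b1 Hb1].
  set (u' := 2*y1*a1+y1+a1-2*x1*b1-x1-b1).
  set (w' := 2*y1*a1+y1+a1+2*x1*b1+x1+b1+1).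
  assert (Hu : y*a - x*b = 2*u') by (unfold u'; subst; ring).
  assert (Hw : y*a + x*b = 2*w') by (unfold w'; subst; ring).
  assert (Huw : u'*w' = e*e*(y^2 - b^2*R^2)).
  { apply Z.mul_reg_l with 4; [clear; lia|].
    transitivity ((y*a - x*b)*(y*a+x*b)); [rewrite Hu, Hw; ring|].
    transitivity (y^2*(a^2+q*b^2) - b^2*(x^2+q*y^2)); [ring|]. rewrite Ea, Ex. ring. }
  assert (Hsum : u' + w' = 2*(2*y1*a1+y1+a1) + 1) by (unfold u', w'; ring).
  destruct (Z.Even_or_Odd u') as [[u2 Hu2]|Ou].
  - (* w' odd: d | u, case (a,-b) *)
    assert (Ow : Z.Odd w') by (exists (2*y1*a1+y1+a1 - u2); clear - Hu2 Hsum; lia).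
    assert (DU : (e*e | u')).
    { rewrite He2. apply (pow2_dvd_odd (2*k-2)) with w'; [clear - Hk; lia|auto|]. rewrite <- He2. exists (y^2-b^2*R^2). transitivity (u'*w'); [ring|rewrite Huw; ring]. }
    destruct (D (x*a + q*y*b) (y*a - x*b)) as [n0 Hn0].
    { transitivity ((x^2+q*y^2)*(a^2+q*b^2)); [ring|]. rewrite Ex, Ea. ring. }
    { rewrite Hu. destruct DU as [z Hz]. exists z. rewrite Hdd, Hz; ring. }
    exists (n0+1).
    set (M := mp q (tp (tmul q n0 g)) (a,b)).
    assert (HM : nm q M <> 0).
    { unfold M. rewrite nm_mp. apply Z.neq_mul_0. split; auto. unfold nm; cbn [fst snd]. rewrite Ea. clear - epos. nia. }
    assert (C1 : cr (x,y) M = 0).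
    { pose proof (cr_mp q (x*a + q*y*b, y*a - x*b) (tp (tmul q n0 g)) (a,b)) as C.
      rewrite Hn0 in C. fold M in C.
      replace (mp q (x*a + q*y*b, y*a - x*b) (a,b)) with ((2*e)^2*x, (2*e)^2*y) in C
        by (rewrite <- Ea; unfold mp; cbn [fst snd]; f_equal; ring).
      unfold cr in C |- *. cbn [fst snd] in C |- *.
      assert ((2*e)^2 * (x * snd M - y * fst M) = 0) by (transitivity (0 * nm q (a,b)); [rewrite <- C; ring | ring]).
      apply Z.mul_eq_0 in H. destruct H as [H|H]; [clear - H epos; nia|exact H]. }
    apply cr_trans with q M; auto. apply cr_sym.
    pose proof (Pstep q n0 g). exact H.
  -
    assert (DW : (e*e | w')).
    { rewrite He2. apply (pow2_dvd_odd (2*k-2)) with u'; [clear - Hk; lia|auto|]. rewrite <- He2. exists (y^2-b^2*R^2). transitivity (u'*w'); [ring|rewrite Huw; ring]. }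
    destruct (D (x*a - q*y*b) (x*b + y*a)) as [n0 Hn0].
    { transitivity ((x^2+q*y^2)*(a^2+q*b^2)); [ring|]. rewrite Ex, Ea. ring. }
    { replace (x*b+y*a) with (y*a+x*b) by ring. rewrite Hw. destruct DW as [z Hz]. exists z. rewrite Hdd, Hz; ring. }
    exists (n0-1).
    pose proof (Pstep q (n0-1) g) as PS. replace (n0-1+1) with n0 in PS by ring.
    assert (C : cr (mp q (x,y) (a,b)) (mp q (tp (tmul q (n0-1) g)) (a,b)) = 0).
    { apply cr_trans with q (tp (tmul q n0 g)); auto. }
    rewrite cr_mp in C. apply Z.mul_eq_0 in C. destruct C as [C|C]; auto.
    unfold nm in C; cbn [fst snd] in C. rewrite Ea in C. clear - C epos; nia.
Qed.

Lemma small_sol q a b : 0 < q -> Z.Odd a -> Z.Odd b -> a^2 + q*b^2 = 4 -> a^2 = 1 /\ b^2 = 1 /\ q = 3.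
Proof.
  intros Hq [a1 Ha] [b1 Hb] E. subst a b.
  assert (A1 : 0 <= a1*(a1+1)) by (clear; nia).
  assert (B1 : 0 <= b1*(b1+1)) by (clear; nia).
  assert (EA : (2*a1+1)^2 = 4*(a1*(a1+1)) + 1) by ring.
  assert (EB : (2*b1+1)^2 = 4*(b1*(b1+1)) + 1) by ring.
  rewrite EA, EB in *.
  assert (q*(4*(b1*(b1+1))+1) >= q*1) by (apply Z.le_ge, Z.mul_le_mono_nonneg_l; lia).
  assert (a1*(a1+1) = 0) by lia.
  assert (q*(4*(b1*(b1+1))+1) = 3) by lia.
  assert (b1*(b1+1) = 0).
  { destruct (Z.eq_dec (b1*(b1+1)) 0); auto. exfalso.
    assert (q*(4*(b1*(b1+1))+1) >= 1*5) by (apply Z.le_ge, Z.mul_le_mono_nonneg; lia). lia. }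
  rewrite H0, H2 in *. lia.
Qed.

Lemma case_k1 q a b : 0 < q -> squarefree q ->
  inT q (a, b, 2 ^ 1) -> primitive (a, b, 2 ^ 1) ->
  forall (x y r : Z), 1 <= r -> inT q (x, y, 2 ^ r) -> primitive (x, y, 2 ^ r) ->
  exists n : Z, cr (x,y) (tp (tmul q n (a, b, 2 ^ 1))) = 0.
Proof.
  intros Hq Sq Ig Pg x y r Hr Ix Px.
  destruct (odd_of_prim q 1 a b Sq ltac:(lia) Ig Pg) as [Oa Ob].
  destruct (odd_of_prim q r x y Sq Hr Ix Px) as [Ox Oy].
  destruct Ig as [Ea _]. destruct Ix as [Ex _]. change (2^1) with 2 in Ea.
  destruct (small_sol q a b Hq Oa Ob ltac:(rewrite Ea; ring)) as (Ha2 & Hb2 & Q3).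
  subst q.
  destruct (Z.eq_dec r 1) as [R1|R1].
  - subst r. change (2^1) with 2 in Ex.
    destruct (small_sol 3 x y ltac:(lia) Ox Oy ltac:(rewrite Ex; ring)) as (Hx2 & Hy2 & _).
    assert (K : (x*b - y*a)*(x*b+y*a) = 0).
    { transitivity (x^2*b^2 - y^2*a^2); [ring|]. rewrite Hx2, Hy2, Ha2, Hb2. ring. }
    apply Z.mul_eq_0 in K. destruct K as [K|K].
    + exists 1. unfold tmul, cr; simpl. clear - K; lia.
    + exists (-1). unfold tmul, cr; simpl. clear - K; lia.
  - exfalso.
    assert (Hp : 2^r = 2^2*2^(r-2)) by (rewrite <- Z.pow_add_r by lia; f_equal; ring).
    rewrite Hp in Ex. change (2^2) with 4 in Ex.
    set (P := 2^(r-2)) in *.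
    destruct Ox as [x1 Hx], Oy as [y1 Hy].
    assert (exists m, x1*(x1+1) = 2*m) as [m Hm].
    { destruct (Z.Even_or_Odd x1) as [[z Hz]|[z Hz]]; [exists (z*(x1+1))|exists (x1*(z+1))]; subst; ring. }
    assert (exists m, y1*(y1+1) = 2*m) as [m' Hm'].
    { destruct (Z.Even_or_Odd y1) as [[z Hz]|[z Hz]]; [exists (z*(y1+1))|exists (y1*(z+1))]; subst; ring. }
    subst x y.
    assert (HH : 4*(x1*(x1+1)) + 12*(y1*(y1+1)) + 4 = 16*P^2) by (transitivity ((4*P)^2); [rewrite <- Ex|]; ring).
    rewrite Hm, Hm' in HH. clear - HH; lia.
Qed.

Theorem theorem3 (q : Z) (k : Z) (a b : Z) :
  0 < q -> squarefree q -> 1 <= k ->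
  inT q (a, b, 2 ^ k) -> primitive (a, b, 2 ^ k) ->
  ~ (exists (x y j : Z), 1 <= j < k /\ inT q (x, y, 2 ^ j) /\ primitive (x, y, 2 ^ j)) ->
  forall (x y r : Z), k <= r -> inT q (x, y, 2 ^ r) -> primitive (x, y, 2 ^ r) ->
  exists n : Z, triple_equiv (x, y, 2 ^ r) (tmul q n (a, b, 2 ^ k)).
Proof.
  intros Hq Sq Hk Ig Pg NJ x y r Hr Ix Px.
  assert (Hc : exists n, cr (x,y) (tp (tmul q n (a,b,2^k))) = 0).
  { destruct (Z.eq_dec k 1) as [K1|K1].
    - subst k. apply (case_k1 q a b Hq Sq Ig Pg x y r Hr Ix Px).
    - apply (main q k a b Hq Sq ltac:(lia) Ig Pg NJ (Z.to_nat r) r x y ltac:(lia) Hr Ix Px). }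
  destruct Hc as [n Hn]. exists n.
  apply cr_equiv with q; auto. apply inT_tmul; auto.
Qed.
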